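(* Let $\mathcal{I}\subseteq\mathcal{M}_m$ be decreasing, $f\in\mathcal{M}_m\setminus\mathcal{I}$, $h\mid f$ with $\operatorname{ind}(f/h)=\{i_1<\dots<i_\mu\}$. If $|J^{\mathcal{I}}_f(i_j)|>j-1$ for all $j\in\{1,\dots,\mu\}$, then $$\Bigl|\mathrm{LTA}(m,2)^{f,\mathcal{I}}_f\cdot\tfrac fh\Bigr|=2^{\deg(f/h)}\prod_{j=1}^{\deg(f/h)}\Bigl(2^{|J^{\mathcal{I}}_f(i_j)|}-2^{j-1}\Bigr).$$
   Context: $\mathcal{M}_m$: square-free monomials in $x_0,\dots,x_{m-1}$ over $\mathbb{F}_2$; $\operatorname{ind}(u)$ the variable indices of $u$, $\deg u=|\operatorname{ind} u|$; $x_jf/x_i$ denotes $f$ with $x_i$ replaced by $x_j$. Decreasing: for equal-degree monomials with increasing indices, $u\preceq_{sh}v$ iff componentwise $\le$; $u\preceq v$ iff $u\preceq_{sh}v^*\mid v$ for some $v^*$; $\mathcal{I}$ decreasing if $f\in\mathcal{I}$, $g\preceq f\Rightarrow g\in\mathcal{I}$. $J_f^{\mathcal{I}}(i)=\{j\in[0,i): j\notin\operatorname{ind}(f),\ x_jf/x_i\in\mathcal{I}\}$. $\mathrm{LTA}(m,2)$: pairs $(\mathbf{B},\varepsilon)$, $\mathbf{B}=(b_{i,j})$ binary lower unitriangular $m\times m$, $\varepsilon\in\mathbb{F}_2^m$, acting on a monomial $u$ by $x_i\mapsto x_i+\sum_{j<i}b_{i,j}x_j+\varepsilon_i$, $i\in\operatorname{ind}u$.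 $\mathrm{LTA}(m,2)_f$: subgroup with $\varepsilon_i=0$ for $i\notin\operatorname{ind} f$, $b_{i,j}=0$ if $i\notin\operatorname{ind}f$ or $j\in\operatorname{ind}f$. $\mathrm{LTA}(m,2)^{f,\mathcal{I}}_f\cdot\frac fh$ is the set of polynomials $(\mathbf{B},\varepsilon)\cdot\frac fh$ with $(\mathbf{B},\varepsilon)\in\mathrm{LTA}(m,2)_f$ such that $b_{i,j}=0$ for $i\in\operatorname{ind}(f/h)$, $j<i$, $j\notin J^{\mathcal{I}}_f(i)$, and the submatrix of $\mathbf{B}$ with rows $\operatorname{ind}(f/h)$ and columns $J^{\mathcal{I}}_f(i_\mu)$ has rank $\mu$. *)

(* Defs.v *)
From mathcomp Require Import all_boot all_order all_algebra.
Set Implicit Arguments. Unset Strict Implicit. Unset Printing Implicit Defensive.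
Import GRing.Theory.
Local Open Scope ring_scope.

(* Square-free monomials in x_0..x_{m-1} are represented by their index set
   ind(u) : {set 'I_m}.  u | v  is  u \subset v,  v / u  is  v :\: u,
   deg u = #|u|.  Polynomials over F_2 are elements of
   F_2[x]/(x_i^2 - x_i), i.e. Boolean functions F_2^m -> F_2. *)

Definition mono (m : nat) := {set 'I_m}.
Definition poly2 (m : nat) := {ffun {ffun 'I_m -> 'F_2} -> 'F_2}.

Definition sidx (m : nat) (u : mono m) : seq nat :=
  sort leq [seq val i | i <- enum u].

Definition sh_le (m : nat) (u v : mono m) : bool :=
  (#|u| == #|v|)%N && all2 leq (sidx u) (sidx v).

Definition mono_le (m : nat) (u v : mono m) : bool :=
  [exists w : mono m, (w \subset v) && sh_le u w].

Definition decreasing (m : nat) (I : {set mono m}) : Prop :=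
  forall f g : mono m, f \in I -> mono_le g f -> g \in I.

Definition Jset (m : nat) (I : {set mono m}) (f : mono m) (i : 'I_m) : {set 'I_m} :=
  [set j : 'I_m | [&& (j < i)%N, j \notin f & ((f :\ i) :|: [set j]) \in I]].

Definition lta_act (m : nat) (B : 'M['F_2]_m) (e : {ffun 'I_m -> 'F_2})
  (u : mono m) : poly2 m :=
  [ffun v : {ffun 'I_m -> 'F_2} =>
     \prod_(i in u) (v i + \sum_(j < m | (j < i)%N) B i j * v j + e i)].

Definition lower_unitri (m : nat) (B : 'M['F_2]_m) : bool :=
  [forall i : 'I_m, B i i == 1] && [forall i : 'I_m, forall j : 'I_m, (i < j)%N ==> (B i j == 0)].

Definition in_LTA_f (m : nat) (f : mono m) (B : 'M['F_2]_m)
  (e : {ffun 'I_m -> 'F_2}) : bool :=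
  [&& lower_unitri B,
      [forall i : 'I_m, (i \notin f) ==> (e i == 0)] &
      [forall i : 'I_m, forall j : 'I_m, ((j < i)%N && ((i \notin f) || (j \in f))) ==> (B i j == 0)]].

Definition subB (m : nat) (B : 'M['F_2]_m) (D C : {set 'I_m}) :
  'M['F_2]_(#|D|, #|C|) :=
  mxsub (fun k : 'I_#|D| => enum_val k) (fun l : 'I_#|C| => enum_val l) B.

Definition in_LTA_fI (m : nat) (I : {set mono m}) (f h : mono m)
  (B : 'M['F_2]_m) (e : {ffun 'I_m -> 'F_2}) : bool :=
  let D := f :\: h in
  [&& in_LTA_f f B e,
      [forall i : 'I_m, forall j : 'I_m,
         [&& i \in D, (j < i)%N & j \notin Jset I f i] ==> (B i j == 0)] &
      (* i_mu = the largest index of f/h *)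
      [forall i : 'I_m, ((i \in D) && [forall k : 'I_m, (k \in D) ==> (k <= i)%N]) ==>
          (\rank (subB B D (Jset I f i)) == #|D|)]].

Definition LTA_orbit (m : nat) (I : {set mono m}) (f h : mono m) : {set poly2 m} :=
  [set p : poly2 m | [exists B : 'M['F_2]_m, exists e : {ffun 'I_m -> 'F_2},
     in_LTA_fI I f h B e && (p == lta_act B e (f :\: h))]].

(* position (0-based) of i in the increasing enumeration of D:
   i = i_{pos+1} *)
Definition pos (m : nat) (D : {set 'I_m}) (i : 'I_m) : nat :=
  #|[set k in D | (k < i)%N]|.

(* Main.v *)
Require Import Defs.
From mathcomp Require Import all_boot all_order all_algebra.
Set Implicit Arguments. Unset Strict Implicit. Unset Printing Implicit Defensive.
Import GRing.Theory.


Fixpoint ins (x : nat) (s : seq nat) : seq nat :=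
  match s with [::] => [:: x] | y :: s' => if (x <= y)%N then x :: s else y :: ins x s' end.

Lemma ins_perm x s : perm_eq (ins x s) (x :: s).
Proof.
elim: s => [|y s IH] //=; case: ifP => _ //.
apply: (@perm_trans _ (y :: x :: s)); first by rewrite perm_cons.
by rewrite -[y :: x :: s]/([:: y] ++ [:: x] ++ s) perm_catCA.
Qed.

Lemma ins_path x z s : (z <= x)%N -> path leq z s -> path leq z (ins x s).
Proof.
elim: s z => [|y s IH] z /= zx; first by rewrite zx.
move=> /andP [zy ps]; case: ifP => xy /=; first by rewrite zx xy.
have yx : (y <= x)%N by rewrite ltnW // ltnNge xy.
by rewrite zy IH.
Qed.

Lemma ins_sorted x s : sorted leq s -> sorted leq (ins x s).
Proof.
case: s => [|y s] //= ps; case: ifP => xy /=; first by rewrite xy.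
by apply: ins_path => //; rewrite ltnW // ltnNge xy.
Qed.

Lemma all2_refl s : all2 leq s s.
Proof. by elim: s => //= y s ->; rewrite leqnn. Qed.

Lemma all2_ins_aux z y s : (z <= y)%N -> path leq z s -> all2 leq (z :: s) (ins y s).
Proof.
elim: s z => [|w s IH] z /= zy; first by rewrite zy.
move=> /andP [zw ps]; case: ifP => yw /=; first by rewrite zy leqnn all2_refl.
have wy : (w <= y)%N by rewrite ltnW // ltnNge yw.
by rewrite zw; have /= := IH w wy ps.
Qed.

Lemma all2_ins x y s : (x <= y)%N -> sorted leq s -> all2 leq (ins x s) (ins y s).
Proof.
elim: s => [|z s IH] /= xy; first by rewrite xy.
move=> ps; case: ifP => xz; case: ifP => yz /=.
- by rewrite xy leqnn all2_refl.
- have zy : (z <= y)%N by rewrite ltnW // ltnNge yz.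
  by rewrite xz; have /= := all2_ins_aux zy ps.
- by move: xz; rewrite (leq_trans xy yz).
- by rewrite leqnn; have /= := IH xy (path_sorted ps).
Qed.

Lemma mem_sidx m (A : {set 'I_m}) n : (n \in sidx A) = [exists i in A, val i == n].
Proof.
rewrite /sidx mem_sort; apply/mapP/existsP => [[i]|[i /andP[iA /eqP<-]]].
  by rewrite mem_enum => iA ->; exists i; rewrite iA eqxx.
by exists i; rewrite ?mem_enum.
Qed.

Lemma uniq_sidx m (A : {set 'I_m}) : uniq (sidx A).
Proof. by rewrite /sidx sort_uniq map_inj_uniq ?enum_uniq //; apply: val_inj. Qed.

Lemma sidxU1 m (C : {set 'I_m}) (x : 'I_m) : x \notin C -> sidx (x |: C) = ins x (sidx C).
Proof.
move=> xC; apply: (sorted_eq leq_trans anti_leq).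
- exact: (sort_sorted leq_total).
- apply: ins_sorted; exact: (sort_sorted leq_total).
apply: (@perm_trans _ ((x : nat) :: sidx C)); last by rewrite perm_sym ins_perm.
apply: uniq_perm; first exact: uniq_sidx.
  rewrite /= uniq_sidx andbT mem_sidx; apply/existsP => [[i /andP [iC /eqP/val_inj ix]]].
  by move: xC; rewrite -ix iC.
move=> n; rewrite in_cons !mem_sidx; apply/existsP/orP.
  move=> [i /andP[]]; rewrite !inE => /orP [/eqP -> /eqP <-|iC in_]; first by left.
  by right; apply/existsP; exists i; rewrite iC.
case=> [/eqP ->|/existsP [i /andP [iC in_]]]; first by exists x; rewrite !inE !eqxx.
by exists i; rewrite !inE iC orbT.
Qed.

Lemma sh_leU1 m (C : {set 'I_m}) (x y : 'I_m) :
  x \notin C -> y \notin C -> (x <= y)%N -> sh_le (x |: C) (y |: C).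
Proof.
move=> xC yC xy; rewrite /sh_le !cardsU1 xC yC eqxx /= !sidxU1 //.
apply: all2_ins => //; exact: (sort_sorted leq_total).
Qed.

Lemma J_nested m (I : {set mono m}) (f : mono m) (i i' : 'I_m) :
  decreasing I -> i \in f -> i' \in f -> (i < i')%N -> Jset I f i \subset Jset I f i'.
Proof.
move=> dec fi fi' ii'; apply/subsetP => j; rewrite !inE => /and3P [ji jf JI].
rewrite (ltn_trans ji ii') jf /=.
have ne : i != i' by rewrite neq_ltn ii'.
have jne : j != i by rewrite neq_ltn ji.
have jne' : j != i' by rewrite neq_ltn (ltn_trans ji ii').
pose C := j |: ((f :\ i) :\ i').
have E1 : (f :\ i') :|: [set j] = i |: C.
  apply/setP => k; rewrite !inE; case: (k =P i) => [->|_]; first by rewrite ne fi.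
  by rewrite /= orbC.
have E2 : (f :\ i) :|: [set j] = i' |: C.
  apply/setP => k; rewrite !inE; case: (k =P i') => [->|_]; first by rewrite eq_sym ne fi'.
  by rewrite /= orbC.
apply: (dec _ _ JI); rewrite E1 E2; apply/existsP; exists (i' |: C); rewrite subxx /=.
apply: sh_leU1; last exact: ltnW.
  by rewrite !inE negb_or eq_sym jne eqxx /= andbF.
by rewrite !inE negb_or eq_sym jne' eqxx.
Qed.

Section SC.
Local Open Scope ring_scope.

Lemma F2_cases (x : 'F_2) : x = 0 \/ x = 1.
Proof. move: x => [[|[|k]] Hk]. left; exact/val_inj. right; exact/val_inj. by []. Qed.

Lemma F2_addxx (x : 'F_2) : x + x = 0.
Proof. by case: (F2_cases x) => ->; apply/eqP. Qed.

Lemma F2_add_eq0 (x y : 'F_2) : x + y = 0 -> x = y.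
Proof. by move=> H; rewrite -[y]add0r -H -addrA F2_addxx addr0. Qed.

Lemma F2_neq0 (x : 'F_2) : x != 0 -> x = 1.
Proof. by case: (F2_cases x) => -> //; rewrite eqxx. Qed.

Definition vec m := {ffun 'I_m -> 'F_2}.
Definition v0 m : vec m := [ffun=> 0].
Definition Vset m (S : {set 'I_m}) : {set vec m} :=
  [set v : vec m | [forall j, (j \notin S) ==> (v j == 0)]].

Lemma VsetP m (S : {set 'I_m}) (v : vec m) :
  reflect (forall j, j \notin S -> v j = 0) (v \in Vset S).
Proof.
rewrite inE; apply: (iffP forallP) => H j; first by move=> jS; move: (H j); rewrite jS => /eqP.
by apply/implyP => /H ->.
Qed.

Lemma card_Vset m (S : {set 'I_m}) : #|Vset S| = (2 ^ #|S|)%N.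
Proof.
have -> : #|Vset S| = #|pffun_on (0 : 'F_2) S predT|.
  apply: eq_card => v; apply/VsetP/pffun_onP => [H|[H _] j jS].
    split=> //; apply/subsetP => j; rewrite inE; apply: contraR => /H ->.
    by rewrite eqxx.
  by apply/eqP; apply: contraR jS => vj; apply: (subsetP H); rewrite inE.
rewrite card_pffun_on; congr (_ ^ _)%N.
by rewrite cardT -cardE card_Fp.
Qed.

Definition lin m (S : {set 'I_m}) (u : vec m) (R : {ffun 'I_m -> vec m}) : vec m :=
  [ffun j => \sum_(i in S) u i * R i j].

Definition indep m (S : {set 'I_m}) (R : {ffun 'I_m -> vec m}) :=
  [forall u : vec m, ((u \in Vset S) && (u != v0 m)) ==> (lin S u R != v0 m)].

Lemma indepP m (S : {set 'I_m}) (R : {ffun 'I_m -> vec m}) :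
  reflect (forall u, u \in Vset S -> lin S u R = v0 m -> u = v0 m) (indep S R).
Proof.
apply: (iffP forallP) => H u.
  move=> uS luR; apply/eqP; apply: contraT => un0.
  by move: (H u); rewrite uS un0 /= luR eqxx.
apply/implyP => /andP [uS un0]; apply: contra un0 => /eqP /(H u uS) ->.
by rewrite eqxx.
Qed.

Definition Rset m (D : {set 'I_m}) (J : 'I_m -> {set 'I_m}) : {set {ffun 'I_m -> vec m}} :=
  [set R : {ffun 'I_m -> vec m} | [forall i, if i \in D then R i \in Vset (J i) else R i == v0 m] && indep D R].

Lemma RsetP m (D : {set 'I_m}) (J : 'I_m -> {set 'I_m}) (R : {ffun 'I_m -> vec m}) :
  reflect [/\ forall i, i \in D -> R i \in Vset (J i),
              forall i, i \notin D -> R i = v0 m & indep D R] (R \in Rset D J).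
Proof.
rewrite inE; apply: (iffP andP) => [[/forallP H ind]|[H1 H2 ind]]; split => //.
- by move=> i iD; move: (H i); rewrite iD.
- by move=> i iD; move: (H i); rewrite (negbTE iD) => /eqP.
apply/forallP => i; case: ifP => iD; first exact: H1.
by rewrite H2 ?iD.
Qed.

Definition spn m (S : {set 'I_m}) (R : {ffun 'I_m -> vec m}) : {set vec m} :=
  [set lin S u R | u in Vset S].

Lemma card_span m (S : {set 'I_m}) (R : {ffun 'I_m -> vec m}) : indep S R -> #|spn S R| = (2 ^ #|S|)%N.
Proof.
move=> /indepP ind; rewrite card_in_imset ?card_Vset // => u u' uS u'S eq.
pose w : vec m := [ffun i => u i - u' i].
have wS : w \in Vset S.
  by apply/VsetP => j jS; rewrite ffunE (VsetP _ _ uS j jS) (VsetP _ _ u'S j jS) subrr.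
have : lin S w R = v0 m.
  apply/ffunP => j; have := congr1 (fun v : vec m => v j) eq; rewrite !ffunE => e.
  by rewrite (eq_bigr (fun i => u i * R i j - u' i * R i j)) ?sumrB ?e ?subrr // => i _; rewrite ffunE mulrBl.
move=> /(ind _ wS) w0; apply/ffunP => i.
by have := congr1 (fun v : vec m => v i) w0; rewrite !ffunE => /eqP; rewrite subr_eq0 => /eqP.
Qed.

Lemma span_sub m (S K : {set 'I_m}) (J : 'I_m -> {set 'I_m}) (R : {ffun 'I_m -> vec m}) :
  (forall i, i \in S -> R i \in Vset (J i)) -> (forall i, i \in S -> J i \subset K) ->
  spn S R \subset Vset K.
Proof.
move=> HR HJ; apply/subsetP => v /imsetP [u _ ->]; apply/VsetP => j jK.
rewrite ffunE big1 // => i iS; rewrite (VsetP _ _ (HR i iS) j) ?mulr0 //.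
by apply: contra jK; apply: (subsetP (HJ i iS)).
Qed.

Lemma lin_split m (D : {set 'I_m}) (a : 'I_m) (u : vec m) (R : {ffun 'I_m -> vec m}) j : a \in D ->
  lin D u R j = u a * R a j + lin (D :\ a) u R j.
Proof.
move=> aD; rewrite !ffunE (bigD1 a) //=; congr (_ + _).
by apply: eq_bigl => i; rewrite !inE andbC.
Qed.

Lemma lin_ext m (S : {set 'I_m}) (u u' : vec m) (R R' : {ffun 'I_m -> vec m}) :
  (forall i, i \in S -> u i = u' i) -> (forall i, i \in S -> R i = R' i) ->
  lin S u R = lin S u' R'.
Proof.
by move=> Hu HR; apply/ffunP => j; rewrite !ffunE; apply: eq_bigr => i iS; rewrite Hu ?HR.
Qed.

Definition rz m (a : 'I_m) (R : {ffun 'I_m -> vec m}) : {ffun 'I_m -> vec m} :=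
  [ffun i => if i == a then v0 m else R i].
Definition upd m (a : 'I_m) (R : {ffun 'I_m -> vec m}) (x : vec m) : {ffun 'I_m -> vec m} :=
  [ffun i => if i == a then x else R i].

End SC.

Section SD.
Local Open Scope ring_scope.


Lemma Rset_restr (m : nat) (D : {set 'I_m}) (J : 'I_m -> {set 'I_m}) (a : 'I_m) (aD : a \in D) (R : {ffun 'I_m -> vec m}) : R \in Rset D J -> rz a R \in Rset (D :\ a) J.
Proof.
move=> /RsetP [H1 H2 /indepP ind]; apply/RsetP; split.
- by move=> i; rewrite in_setD1 => /andP [ia iD]; rewrite ffunE (negbTE ia); apply: H1.
- move=> i; rewrite in_setD1 negb_and negbK ffunE => /orP [/eqP ->|iD]; first by rewrite eqxx.
  by case: ifP => // _; rewrite H2.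
apply/indepP => u uS lu; apply: ind.
  apply/VsetP => j jD; apply: (VsetP _ _ uS); rewrite in_setD1 negb_and jD orbT //.
apply/ffunP => j; rewrite (lin_split _ _ _ aD) (VsetP _ _ uS a) ?inE ?eqxx // mul0r add0r.
rewrite -lu; congr (_ _ j); apply: lin_ext => // i.
by rewrite in_setD1 ffunE => /andP [/negbTE ->].
Qed.

Lemma Rset_row (m : nat) (D : {set 'I_m}) (J : 'I_m -> {set 'I_m}) (a : 'I_m) (aD : a \in D) (R : {ffun 'I_m -> vec m}) : R \in Rset D J -> R a \in Vset (J a) :\: spn (D :\ a) (rz a R).
Proof.
move=> RD; case/RsetP: (RD) => H1 H2 /indepP ind; rewrite in_setD H1 // andbT.
apply/imsetP => [[u uS Ra]].
pose u2 : vec m := [ffun i => if i == a then 1 else u i].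
have u2S : u2 \in Vset D.
  apply/VsetP => j jD; rewrite ffunE; case: ifP => [/eqP ja|_]; first by move: jD; rewrite ja aD.
  by apply: (VsetP _ _ uS); rewrite in_setD1 negb_and jD orbT.
have : lin D u2 R = v0 m.
  apply/ffunP => j; rewrite (lin_split _ _ _ aD).
  have -> : lin (D :\ a) u2 R j = lin (D :\ a) u (rz a R) j.
    congr (_ _ j); apply: lin_ext => i; rewrite in_setD1 => /andP [/negbTE ia _]; by rewrite !ffunE ia.
  by rewrite -Ra [u2 a]ffunE eqxx mul1r F2_addxx ffunE.
move=> /(ind _ u2S) /ffunP /(_ a); rewrite !ffunE eqxx => /eqP.
by rewrite oner_eq0.
Qed.

Lemma Rset_upd (m : nat) (D : {set 'I_m}) (J : 'I_m -> {set 'I_m}) (a : 'I_m) (aD : a \in D) (R' : {ffun 'I_m -> vec m}) (x : vec m) : R' \in Rset (D :\ a) J -> x \in Vset (J a) :\: spn (D :\ a) R' ->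
  upd a R' x \in Rset D J.
Proof.
move=> /RsetP [H1 H2 /indepP ind]; rewrite in_setD => /andP [xsp xV].
apply/RsetP; split.
- move=> i iD; rewrite ffunE; case: ifP => [/eqP -> //|ia]; apply: H1.
  by rewrite in_setD1 ia iD.
- move=> i iD; rewrite ffunE; case: ifP => [/eqP ia|_]; first by move: iD; rewrite ia aD.
  by apply: H2; rewrite in_setD1 negb_and iD orbT.
apply/indepP => u uS lu.
have lin' : lin (D :\ a) u (upd a R' x) = lin (D :\ a) u R'.
  apply: lin_ext => // i; rewrite in_setD1 ffunE => /andP [/negbTE -> _] //.
have uS' : u \in Vset D -> u a = 0 -> u \in Vset (D :\ a).
  move=> _ ua; apply/VsetP => j; rewrite in_setD1 negb_and negbK => /orP [/eqP -> //|jD].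
  exact: (VsetP _ _ uS).
case: (F2_cases (u a)) => ua.
  apply: ind; first exact: uS' uS ua.
  apply/ffunP => j; have := congr1 (fun v : vec m => v j) lu.
  by rewrite (lin_split _ _ _ aD) lin' ua mul0r add0r.
exfalso; move/negP: xsp; apply; apply/imsetP.
pose u2 : vec m := [ffun i => if i == a then 0 else u i].
have u2S : u2 \in Vset (D :\ a).
  apply/VsetP => j; rewrite in_setD1 negb_and negbK ffunE => /orP [->//|jD].
  by case: ifP => // _; apply: (VsetP _ _ uS).
exists u2 => //; apply/ffunP => j; have := congr1 (fun v : vec m => v j) lu.
have updA : upd a R' x a = x by rewrite ffunE eqxx.
rewrite /= (lin_split _ _ _ aD) lin' ua mul1r updA [v0 m j]ffunE => /F2_add_eq0 ->.
congr (_ _ j); apply: lin_ext => // i; rewrite in_setD1 => /andP [/negbTE ia _].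
by rewrite ffunE ia.
Qed.


End SD.

Section SE.
Local Open Scope ring_scope.

Lemma Rset0 m (J : 'I_m -> {set 'I_m}) : Rset set0 J = [set [ffun=> v0 m]].
Proof.
apply/setP => R; rewrite [RHS]inE; apply/RsetP/eqP => [[_ H2 _]|->].
  by apply/ffunP => i; rewrite ffunE H2 ?inE.
split => //; first by move=> i; rewrite inE.
  by move=> i _; rewrite ffunE.
apply/indepP => u uS _; apply/ffunP => j; rewrite ffunE; apply: (VsetP _ _ uS).
by rewrite inE.
Qed.

Lemma card_fiber m (J : 'I_m -> {set 'I_m}) (D : {set 'I_m}) (a : 'I_m) R' :
  a \in D -> (forall i, i \in D :\ a -> J i \subset J a) -> R' \in Rset (D :\ a) J ->
  #|[set R | (R \in Rset D J) && (rz a R == R')]| = (2 ^ #|J a| - 2 ^ #|D :\ a|)%N.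
Proof.
move=> aD nest R'in.
have -> : [set R | (R \in Rset D J) && (rz a R == R')] = upd a R' @: (Vset (J a) :\: spn (D :\ a) R').
  apply/setP => R; rewrite inE; apply/andP/imsetP => [[RD /eqP <-]|[x xin ->]].
    exists (R a); first exact: Rset_row.
    by apply/ffunP => i; rewrite !ffunE; case: eqP => // ->.
  split; first exact: Rset_upd.
  case/RsetP: R'in => _ H2 _.
  apply/eqP/ffunP => i; rewrite !ffunE; case: ifP => [/eqP ->|-> //].
  by rewrite H2 // in_setD1 eqxx.
rewrite card_imset; last first.
  by move=> x y /(congr1 (fun R : {ffun 'I_m -> vec m} => R a)); rewrite !ffunE eqxx.
case/RsetP: R'in => H1 _ ind.
rewrite (cardsD (Vset (J a))) (setIidPr _) ?card_Vset ?card_span //.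
exact: (span_sub (J := J)).
Qed.

Lemma card_Rset m (J : 'I_m -> {set 'I_m}) (D : {set 'I_m}) :
  (forall i i', i \in D -> i' \in D -> (i < i')%N -> J i \subset J i') ->
  #|Rset D J| = (\prod_(i in D) (2 ^ #|J i| - 2 ^ pos D i))%N.
Proof.
move=> nest; move: {2}#|D| (erefl #|D|) => n; elim: n D nest => [|n IH] D nest cD.
  by rewrite (cards0_eq cD) big_set0 Rset0 cards1.
have /set0Pn [i0 i0D] : D != set0 by rewrite -card_gt0 cD.
case: (arg_maxnP (fun i : 'I_m => val i) i0D) => a aD0 amax0.
have aD : a \in D := aD0.
have amax : forall j, j \in D -> (j <= a)%N := amax0.
have cD' : #|D :\ a| = n by move: cD; rewrite (cardsD1 a D) aD => [[]].
have lta : forall i, i \in D :\ a -> (i < a)%N.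
  move=> i; rewrite in_setD1 => /andP [ia iD]; rewrite ltn_neqAle amax // andbT.
  by apply: contra ia => /eqP/val_inj ->.
have nest' : forall i i', i \in D :\ a -> i' \in D :\ a -> (i < i')%N -> J i \subset J i'.
  by move=> i i'; rewrite !in_setD1 => /andP [_ iD] /andP [_ i'D]; apply: nest.
have nesta : forall i, i \in D :\ a -> J i \subset J a.
  move=> i iD'; apply: nest => //; last exact: lta.
  by move: iD'; rewrite in_setD1 => /andP [].
rewrite -sum1_card (partition_big (rz a) (mem (Rset (D :\ a) J))) /=; last first.
  by move=> R; apply: Rset_restr.
rewrite (eq_bigr (fun _ => (2 ^ #|J a| - 2 ^ #|D :\ a|)%N)); last first.
  by move=> R' R'in; rewrite sum1dep_card card_fiber.
rewrite sum_nat_const IH // (bigD1 a aD) /= mulnC.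
have posa : pos D a = #|D :\ a|.
  rewrite /pos; apply: eq_card => k; rewrite !inE.
  case kD: (k \in D); rewrite ?andbF ?andbT //=.
  by rewrite ltn_neqAle amax // andbT.
rewrite posa; congr (_ * _)%N.
apply: eq_big => [i|i iD]; first by rewrite in_setD1 andbC.
have ia := lta i iD.
congr (_ - 2 ^ _)%N; rewrite /pos; apply: eq_card => k; rewrite !inE.
case: (ltnP k i) => ki; rewrite ?andbT ?andbF //.
rewrite andbC; case: (k \in D) => //=; apply/eqP => ka.
by move: ki; rewrite ka ltnNge ltnW.
Qed.

End SE.

Section SF.
Local Open Scope ring_scope.

Lemma rank_indep m (D K : {set 'I_m}) (J : 'I_m -> {set 'I_m}) (B : 'M['F_2]_m)
  (R : {ffun 'I_m -> vec m}) :
  (forall i, i \in D -> R i \in Vset (J i)) -> (forall i, i \in D -> J i \subset K) ->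
  (forall i j, i \in D -> j \in K -> B i j = R i j) ->
  row_free (subB B D K) = indep D R.
Proof.
move=> HR HJ HB; apply/idP/indepP => [rf u uS lu|ind].
  pose u' : 'rV['F_2]_#|D| := \row_k u (enum_val k).
  have : u' *m subB B D K == 0.
    apply/eqP/rowP => l; rewrite !mxE.
    apply: etrans (_ : _ = lin D u R (enum_val l)) _; last by rewrite lu ffunE.
    rewrite ffunE (big_enum_val (fun i => u i * R i (enum_val l))) /=.
    apply: eq_bigr => k _; rewrite !mxE HB //; exact: enum_valP.
  rewrite mulmx_free_eq0 // => /eqP u'0.
  apply/ffunP => i; rewrite ffunE; case iD: (i \in D); last first.
    by apply: (VsetP _ _ uS); rewrite iD.
  have := congr1 (fun M : 'rV_#|D| => M 0 (enum_rank_in iD i)) u'0.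
  by rewrite !mxE enum_rankK_in.
rewrite -kermx_eq0; apply/negPn/negP => /rowV0Pn [u' u'K u'n0].
move: u'K; rewrite sub_kermx => /eqP u'A.
pose u : vec m := [ffun i => if [pick k | enum_val k == i] is Some k then u' 0 k else 0].
have ue : forall k, u (enum_val k) = u' 0 k.
  move=> k; rewrite ffunE; case: pickP => [k' /eqP /enum_val_inj -> //|/(_ k)].
  by rewrite eqxx.
have uS : u \in Vset D.
  apply/VsetP => i iD; rewrite ffunE; case: pickP => // k /eqP ek.
  by move: iD; rewrite -ek enum_valP.
have lu : lin D u R = v0 m.
  apply/ffunP => j; rewrite !ffunE (big_enum_val (fun i => u i * R i j)) /=.
  case jK: (j \in K).
    have := congr1 (fun M : 'rV_#|K| => M 0 (enum_rank_in jK j)) u'A.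
    rewrite !mxE => H; rewrite -[RHS]H; apply: eq_bigr => k _; rewrite ue !mxE enum_rankK_in // HB //.
    exact: enum_valP.
  rewrite big1 // => k _; rewrite (VsetP _ _ (HR _ (enum_valP k)) j) ?mulr0 //.
  by apply: contraFN jK; apply: (subsetP (HJ _ (enum_valP k))).
move: (ind u uS lu) => u0; move/negP: u'n0; apply; apply/eqP/rowP => k.
by have := congr1 (fun v : vec m => v (enum_val k)) u0; rewrite ue !ffunE mxE.
Qed.

End SF.

Section SG.
Local Open Scope ring_scope.

Lemma F2_lin (a b c d : 'F_2) : 1 + a + b + c + d = 1 -> a + b = d + c.
Proof.
by case: (F2_cases a) => ->; case: (F2_cases b) => ->; case: (F2_cases c) => ->; case: (F2_cases d) => ->; move/eqP => H; apply/eqP; move: H.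
Qed.
Lemma F2_x (e S : 'F_2) : 1 + e + S + S + e = 1.
Proof. by rewrite -(addrA _ S S) F2_addxx addr0 -addrA F2_addxx addr0. Qed.

Definition Psi m (D : {set 'I_m}) (Re : {ffun 'I_m -> vec m} * vec m) : poly2 m :=
  [ffun v : {ffun 'I_m -> 'F_2} => \prod_(i in D) (v i + \sum_j Re.1 i j * v j + Re.2 i)].

Lemma Psi_inj m (D : {set 'I_m}) (J : 'I_m -> {set 'I_m}) :
  (forall i j, i \in D -> j \in J i -> j \notin D) ->
  {in setX (Rset D J) (Vset D) &, injective (Psi D)}.
Proof.
move=> JD [R e] [R' e'] /setXP [/= RD eD] /setXP [/= RD' eD'] eq.
case/RsetP: RD => HR1 HR2 _; case/RsetP: RD' => HR1' HR2' _.
have claim : forall (w : vec m) i, i \in D ->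
    e i + \sum_j R i j * w j = e' i + \sum_j R' i j * w j.
  move=> w i iD.
  pose sol : vec m := [ffun k => if k \in D then 1 + e k + \sum_j R k j * w j else w k].
  have ssum : forall (Q : vec m) k, k \in D -> Q \in Vset (J k) ->
      \sum_j Q j * sol j = \sum_j Q j * w j.
    move=> Q k kD QJ; apply: eq_bigr => j _; case jJ: (j \in J k).
      by rewrite ffunE (negbTE (JD _ _ kD jJ)).
    by rewrite (VsetP _ _ QJ j) ?jJ // !mul0r.
  have P1 : Psi D (R, e) sol = 1.
    rewrite ffunE big1 // => k kD /=; rewrite (ssum _ k kD (HR1 k kD)) ffunE kD.
    exact: F2_x.
  move: P1; rewrite eq ffunE => P1.
  have H0 : (1 : 'F_2) != 0 by rewrite oner_eq0.
  rewrite -P1 in H0; move/prodf_neq0: H0 => /(_ i iD) /F2_neq0 /=.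
  rewrite (ssum _ i iD (HR1' i iD)) ffunE iD => Fi.
  move: Fi; move: (e i) (e' i) (\sum_j R i j * w j) (\sum_j R' i j * w j) => a b c d Fi.
  exact: (F2_lin Fi).
have ee : forall i, e i = e' i.
  move=> i; case iD: (i \in D); last by rewrite (VsetP _ _ eD) ?iD // (VsetP _ _ eD') ?iD.
  have := claim (v0 m) i iD; rewrite !big1 ?addr0 // => j _; by rewrite ffunE mulr0.
have RR : forall i, R i = R' i.
  move=> i; case iD: (i \in D); last by rewrite HR2 ?iD // HR2' ?iD.
  apply/ffunP => k; pose w : vec m := [ffun j => if j == k then 1 else 0].
  have sd : forall Q : vec m, \sum_j Q j * w j = Q k.
    move=> Q; rewrite (bigD1 k) //= ffunE eqxx mulr1 big1 ?addr0 // => j /negbTE jk.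
    by rewrite ffunE jk mulr0.
  by have := claim w i iD; rewrite ee !sd => /addrI.
by congr pair; apply/ffunP.
Qed.

End SG.

Section SH.
Local Open Scope ring_scope.

Lemma ord_neq m (i j : 'I_m) : (j < i)%N -> (i == j) = false.
Proof. by move=> ji; apply/negbTE; apply: contraTneq ji => ->; rewrite ltnn. Qed.

Lemma ord_neq' m (i j : 'I_m) : (i < j)%N -> (i == j) = false.
Proof. by move=> ij; rewrite eq_sym ord_neq. Qed.

Lemma rk_iff m (I : {set mono m}) (f : mono m) (D : {set 'I_m}) (B : 'M['F_2]_m)
  (R : {ffun 'I_m -> vec m}) :
  (forall i i', i \in D -> i' \in D -> (i < i')%N -> Jset I f i \subset Jset I f i') ->
  (forall i, i \in D -> R i \in Vset (Jset I f i)) ->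
  (forall i j, i \in D -> j \notin f -> B i j = R i j) ->
  [forall i : 'I_m, ((i \in D) && [forall k : 'I_m, (k \in D) ==> (k <= i)%N]) ==>
          (\rank (subB B D (Jset I f i)) == #|D|)] = indep D R.
Proof.
move=> nest HR HB.
case: (set_0Vmem D) => [D0|[i0 i0D]].
  rewrite D0; apply/idP/idP => _; last by apply/forallP => i; rewrite inE.
  apply/indepP => u uS _; apply/ffunP => j; rewrite ffunE; apply: (VsetP _ _ uS).
  by rewrite inE.
case: (arg_maxnP (fun i : 'I_m => val i) i0D) => a aD0 amax0.
have aD : a \in D := aD0.
have amax : forall j, j \in D -> (j <= a)%N := amax0.
have HJ : forall i, i \in D -> Jset I f i \subset Jset I f a.
  move=> i iD; case: (ltngtP i a) => [ia|ai|/val_inj ->]; first exact: nest.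
    by move: (amax i iD); rewrite leqNgt ai.
  exact: subxx.
have HB' : forall i j, i \in D -> j \in Jset I f a -> B i j = R i j.
  by move=> i j iD; rewrite inE => /and3P [_ jf _]; apply: HB.
have RI := rank_indep HR HJ HB'.
apply/forallP/idP => [H|ind i].
  move: (H a); rewrite aD /=.
  have -> : [forall k, (k \in D) ==> (k <= a)%N] by apply/forallP => k; apply/implyP; exact: amax.
  by rewrite /= -RI.
apply/implyP => /andP [iD /forallP imx].
have ia : i = a.
  apply/val_inj/eqP; rewrite eqn_leq amax //=.
  by move: (imx a); rewrite aD.
by rewrite ia; move: ind; rewrite -RI.
Qed.

End SH.

Section SI.
Local Open Scope ring_scope.

Lemma main m (I : {set mono m}) (f h : mono m) : decreasing I ->
  #|LTA_orbit I f h| = (#|Rset (f :\: h) (Jset I f)| * 2 ^ #|f :\: h|)%N.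
Proof.
move=> dec.
rewrite /LTA_orbit /in_LTA_fI /=.
set D := f :\: h.
have Df : forall i, i \in D -> i \in f by move=> i; rewrite inE => /andP [].
have Jf : forall i j, j \in Jset I f i -> (j < i)%N && (j \notin f).
  by move=> i j; rewrite inE => /and3P [-> -> _].
have nest : forall i i', i \in D -> i' \in D -> (i < i')%N -> Jset I f i \subset Jset I f i'.
  move=> i i' iD i'D; apply: J_nested => //; exact: Df.
have JD : forall i j, i \in D -> j \in Jset I f i -> j \notin D.
  move=> i j _ /Jf /andP [_ jf]; apply: contra jf; exact: Df.
have E : forall S : {set poly2 m}, S =i Psi D @: setX (Rset D (Jset I f)) (Vset D) ->
    #|S| = (#|Rset D (Jset I f)| * 2 ^ #|D|)%N.
  move=> S /eq_card ->; rewrite card_in_imset ?cardsX ?card_Vset //; exact: Psi_inj.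
apply: E => p; rewrite inE; apply/existsP/imsetP.
  case=> B /existsP [e /andP [/and3P [Hf /forallP Bj rk] /eqP ->]].
  case/and3P: Hf => /andP [_ /forallP up] _ _.
  pose keyR : {ffun 'I_m -> vec m} :=
    [ffun i => [ffun j => if (i \in D) && (j \in Jset I f i) then B i j else 0]].
  pose keyE : vec m := [ffun i => if i \in D then e i else 0].
  have HRk : forall i, i \in D -> keyR i \in Vset (Jset I f i).
    by move=> i iD; apply/VsetP => j jJ; rewrite !ffunE iD (negbTE jJ).
  have Bz : forall i j : 'I_m, i \in D -> (j < i)%N -> j \notin Jset I f i -> B i j = 0.
    move=> i j iD ji jJ; move: (Bj i) => /forallP /(_ j) /implyP; rewrite iD ji jJ.
    by move=> /(_ isT) /eqP.
  have HBk : forall i j : 'I_m, i \in D -> j \notin f -> B i j = keyR i j.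
    move=> i j iD jf; rewrite !ffunE iD /=; case jJ: (j \in Jset I f i) => //.
    case: (ltngtP j i) => [ji|ij|/val_inj ji].
    - by apply: Bz => //; rewrite jJ.
    - by move: (up i) => /forallP /(_ j) /implyP /(_ ij) /eqP.
    - by move: jf; rewrite ji Df.
  exists (keyR, keyE).
    rewrite inE /=; apply/andP; split.
      apply/RsetP; split => //.
        by move=> i iD; apply/ffunP => j; rewrite !ffunE (negbTE iD).
      by rewrite -(rk_iff nest HRk HBk).
    by apply/VsetP => i iD; rewrite ffunE (negbTE iD).
  apply/ffunP => v; rewrite !ffunE; apply: eq_bigr => i iD /=; rewrite !ffunE iD.
  congr (_ + _ + _); rewrite big_mkcond; apply: eq_bigr => j _; rewrite !ffunE /=.
  case: ltnP => ji; case jJ: (j \in Jset I f i) => //.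
  - by rewrite Bz ?jJ.
  - by move: (Jf _ _ jJ); rewrite ltnNge ji.
  - by rewrite mul0r.
case=> [[R e]] /setXP [/= Rin ein] ->.
case/RsetP: (Rin) => HR1 HR2 ind.
have RJ : forall i j : 'I_m, ~~ ((i \in D) && (j \in Jset I f i)) -> R i j = 0.
  move=> i j; case iD: (i \in D) => /= jJ; first exact: (VsetP _ _ (HR1 i iD)).
  by rewrite HR2 ?iD // ffunE.
pose B : 'M['F_2]_m := \matrix_(i, j) (if i == j then 1 else R i j).
exists B; apply/existsP; exists e; apply/andP; split; last first.
  apply/eqP/ffunP => v; rewrite !ffunE; apply: eq_bigr => i iD /=.
  congr (_ + _ + _); symmetry; rewrite big_mkcond; apply: eq_bigr => j _ /=.
  case: ltnP => ji; first by rewrite mxE (ord_neq ji).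
  rewrite RJ ?mul0r // iD /=; apply/negP => /Jf /andP [jlt _].
  by move: ji; rewrite leqNgt jlt.
have HB : forall i j : 'I_m, i \in D -> j \notin f -> B i j = R i j.
  move=> i j iD jf; rewrite mxE; case: eqP => // ij.
  by move: jf; rewrite -ij Df.
apply/and3P; split; last by rewrite (rk_iff nest HR1 HB).
  apply/and3P; split.
  - apply/andP; split; apply/forallP => i; first by rewrite mxE eqxx.
    apply/forallP => j; apply/implyP => ij; rewrite mxE (ord_neq' ij) RJ //.
    apply/negP => /andP [_ /Jf /andP [ji _]].
    by move: ij; rewrite ltnNge ltnW.
  - apply/forallP => i; apply/implyP => ifn; apply/eqP; apply: (VsetP _ _ ein).
    by apply: contra ifn; exact: Df.
  - apply/forallP => i; apply/forallP => j; apply/implyP => /andP [ji H].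
    rewrite mxE (ord_neq ji) RJ //; apply/negP => /andP [iD /Jf /andP [_ jf]].
    by move: H; rewrite (negbTE jf) orbF Df.
apply/forallP => i; apply/forallP => j; apply/implyP => /and3P [iD ji jJ].
by rewrite mxE (ord_neq ji) RJ // iD.
Qed.

End SI.

Theorem proposition6 (m : nat) (I : {set mono m}) (f h : mono m) :
  decreasing I ->
  f \notin I ->
  h \subset f ->
  (forall i : 'I_m, i \in f :\: h -> (pos (f :\: h) i < #|Jset I f i|)%N) ->
  #|LTA_orbit I f h| =
    (2 ^ #|f :\: h| *
     \prod_(i in f :\: h) (2 ^ #|Jset I f i| - 2 ^ pos (f :\: h) i))%N.
Proof.
move=> dec _ _ _.
rewrite main // mulnC; congr (_ * _)%N; apply: card_Rset => i i' iD i'D ii'.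
have Df : forall k, k \in f :\: h -> k \in f by move=> k; rewrite inE => /andP [].
by apply: J_nested => //; apply: Df.
Qed.
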